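(* Let $a,b>0$, $I=[g(b),b]$, $J=[f(a),a]$, and let $g$ and $f$ be decreasing homeomorphisms of $I$ and $J$ onto their images $g(I)\subseteq I$ and $f(J)\subseteq J$ such that (1) $0$ is an attracting fixed point of both $f$ and $g$; (2) $g^2(x)<x$ for all $x\in(0,b]$; (3) $f^2(x)<x$ for all $x\in(0,a]$. Then there exists a (not necessarily unique) homeomorphism $h:[f(a),a]\to[g(b),b]$ such that $g(h(x))=h(f(x))$ for all $x\in[f(a),a]$.
   Context: A fixed point $p$ of a homeomorphism $\phi$ is attracting if there is a neighbourhood $U$ of $p$ with $\phi^n(x)\to p$ for all $x\in U$. $\phi^2$ denotes $\phi\circ\phi$. *)

(* Defs.v *)
From Stdlib Require Import Reals.
Open Scope R_scope.

Definition Icc (lo hi : R) : R -> Prop := fun x => lo <= x <= hi.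

Definition image (f : R -> R) (A : R -> Prop) : R -> Prop :=
  fun y => exists x, A x /\ y = f x.

Definition continuous_on (D : R -> Prop) (f : R -> R) : Prop :=
  forall x, D x -> forall eps, 0 < eps ->
    exists delta, 0 < delta /\
      forall y, D y -> Rabs (y - x) < delta -> Rabs (f y - f x) < eps.

Definition homeo_onto (A B : R -> Prop) (h : R -> R) : Prop :=
  (forall x, A x -> B (h x)) /\
  exists hinv : R -> R,
    (forall y, B y -> A (hinv y)) /\
    (forall x, A x -> hinv (h x) = x) /\
    (forall y, B y -> h (hinv y) = y) /\
    continuous_on A h /\ continuous_on B hinv.

Definition decreasing_on (D : R -> Prop) (f : R -> R) : Prop :=
  forall x y, D x -> D y -> x < y -> f y < f x.

Definition attracting_fixed_point (D : R -> Prop) (f : R -> R) (p : R) : Prop :=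
  D p /\ f p = p /\
  exists eps, 0 < eps /\
    forall x, D x -> Rabs (x - p) < eps -> Un_cv (fun n => Nat.iter n f x) p.

(* Main.v *)
Require Import Defs.
From Stdlib Require Import Reals Lra Lia ClassicalEpsilon Classical.
Open Scope R_scope.

Lemma fun_choice {P : R -> R -> Prop} :
  (forall y, exists x, P y x) -> exists h : R -> R, forall y, P y (h y).
Proof.
  intros H. exists (fun y => proj1_sig (constructive_indefinite_description _ (H y))).
  intros y. exact (proj2_sig (constructive_indefinite_description _ (H y))).
Qed.

Lemma clamp_lip c d x t : c <= d ->
  Rabs (Rmax c (Rmin d x) - Rmax c (Rmin d t)) <= Rabs (x - t).
Proof.
  intros Hcd. unfold Rmax, Rmin; repeat destruct Rle_dec; unfold Rabs;
  repeat destruct Rcase_abs; lra.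
Qed.

Lemma ivt_on c d (phi : R -> R) y : c <= d -> continuous_on (Icc c d) phi ->
  (phi c <= y <= phi d \/ phi d <= y <= phi c) ->
  exists x, Icc c d x /\ phi x = y.
Proof.
  intros Hcd Hc Hy.
  set (cl := fun t => Rmax c (Rmin d t)).
  assert (Hcl : forall t, Icc c d (cl t)).
  { intros t; unfold cl, Icc, Rmax, Rmin; repeat destruct Rle_dec; lra. }
  assert (Hclid : forall t, Icc c d t -> cl t = t).
  { intros t [H1 H2]; unfold cl, Rmax, Rmin; repeat destruct Rle_dec; lra. }
  set (psi := fun t => phi (cl t) - y).
  assert (Hcont : continuity psi).
  { intros t eps Heps.
    destruct (Hc (cl t) (Hcl t) eps Heps) as [del [Hdel Hd]].
    exists del; split; [lra|]. intros x [_ Hx].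
    simpl in *. unfold Rdist in *. unfold psi.
    replace (phi (cl x) - y - (phi (cl t) - y)) with (phi (cl x) - phi (cl t)) by ring.
    apply Hd; [apply Hcl|]. eapply Rle_lt_trans; [apply clamp_lip; lra|]. exact Hx. }
  destruct (IVT_cor psi c d Hcont Hcd) as [z [Hz Hpz]].
  { unfold psi. rewrite (Hclid c), (Hclid d) by (unfold Icc; lra). nra. }
  exists z. split; [exact Hz|]. unfold psi in Hpz. rewrite Hclid in Hpz by exact Hz. lra.
Qed.

Lemma mono_onto_cont c d e k (phi : R -> R) :
  (forall x y, Icc c d x -> Icc c d y -> x < y -> phi x < phi y) ->
  (forall x, Icc c d x -> Icc e k (phi x)) ->
  (forall y, Icc e k y -> exists x, Icc c d x /\ phi x = y) ->
  continuous_on (Icc c d) phi.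
Proof.
  intros Hm Hin Hon x Hx eps Heps.
  assert (HR : exists dR, 0 < dR /\ forall y, Icc c d y -> x <= y < x + dR -> phi y < phi x + eps).
  { destruct (Rlt_or_le (phi x) k) as [Hlt|Hge].
    - set (t := Rmin (phi x + eps/2) k).
      assert (Ht : Icc e k t).
      { pose proof (Hin x Hx) as [H1 H2]. unfold t, Icc, Rmin; destruct Rle_dec; lra. }
      destruct (Hon t Ht) as [x1 [Hx1 Hpx1]].
      assert (Hxx1 : x < x1).
      { destruct (Rlt_or_le x x1) as [H|H]; [exact H|].
        exfalso. destruct (Req_dec x1 x) as [E|E].
        - subst. unfold t, Rmin in Hpx1; destruct Rle_dec; lra.
        - assert (phi x1 < phi x) by (apply Hm; auto; lra).
          unfold t, Rmin in Hpx1; destruct Rle_dec; lra. }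
      exists (x1 - x); split; [lra|]. intros y Hy [Hy1 Hy2].
      assert (phi y < phi x1) by (apply Hm; auto; lra).
      assert (t <= phi x + eps/2) by (unfold t; apply Rmin_l). lra.
    - exists 1; split; [lra|]. intros y Hy _. pose proof (Hin y Hy) as [_ H]. lra. }
  assert (HL : exists dL, 0 < dL /\ forall y, Icc c d y -> x - dL < y <= x -> phi x - eps < phi y).
  { destruct (Rlt_or_le e (phi x)) as [Hlt|Hge].
    - set (t := Rmax (phi x - eps/2) e).
      assert (Ht : Icc e k t).
      { pose proof (Hin x Hx) as [H1 H2]. unfold t, Icc, Rmax; destruct Rle_dec; lra. }
      destruct (Hon t Ht) as [x1 [Hx1 Hpx1]].
      assert (Hxx1 : x1 < x).
      { destruct (Rlt_or_le x1 x) as [H|H]; [exact H|].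
        exfalso. destruct (Req_dec x1 x) as [E|E].
        - subst. unfold t, Rmax in Hpx1; destruct Rle_dec; lra.
        - assert (phi x < phi x1) by (apply Hm; auto; lra).
          unfold t, Rmax in Hpx1; destruct Rle_dec; lra. }
      exists (x - x1); split; [lra|]. intros y Hy [Hy1 Hy2].
      assert (phi x1 < phi y) by (apply Hm; auto; lra).
      assert (phi x - eps/2 <= t) by (unfold t; apply Rmax_l). lra.
    - exists 1; split; [lra|]. intros y Hy _. pose proof (Hin y Hy) as [H _]. lra. }
  destruct HR as [dR [HdR HR]]. destruct HL as [dL [HdL HL]].
  exists (Rmin dR dL). split; [apply Rmin_glb_lt; lra|].
  intros y Hy Hxy.
  assert (Rmin dR dL <= dR) by apply Rmin_l. assert (Rmin dR dL <= dL) by apply Rmin_r.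
  destruct (Rle_lt_dec x y) as [Hle|Hlt].
  - assert (phi x <= phi y).
    { destruct (Req_dec x y) as [E|E]; [subst; lra|]. left; apply Hm; auto; lra. }
    assert (phi y < phi x + eps) by (apply HR; auto; unfold Rabs in Hxy; destruct Rcase_abs in Hxy; lra).
    unfold Rabs; destruct Rcase_abs; lra.
  - assert (phi y < phi x) by (apply Hm; auto).
    assert (phi x - eps < phi y) by (apply HL; auto; unfold Rabs in Hxy; destruct Rcase_abs in Hxy; lra).
    unfold Rabs; destruct Rcase_abs; lra.
Qed.

Lemma mono_onto_homeo c d e k (phi : R -> R) :
  (forall x y, Icc c d x -> Icc c d y -> x < y -> phi x < phi y) ->
  (forall x, Icc c d x -> Icc e k (phi x)) ->
  (forall y, Icc e k y -> exists x, Icc c d x /\ phi x = y) ->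
  homeo_onto (Icc c d) (Icc e k) phi.
Proof.
  intros Hm Hin Hon. split; [exact Hin|].
  assert (Hinj : forall x y, Icc c d x -> Icc c d y -> phi x = phi y -> x = y).
  { intros x y Hx Hy E. destruct (Rtotal_order x y) as [H|[H|H]]; auto.
    - pose proof (Hm _ _ Hx Hy H); lra.
    - pose proof (Hm _ _ Hy Hx H); lra. }
  destruct (@fun_choice (fun y x => Icc e k y -> Icc c d x /\ phi x = y)) as [hi Hhi].
  { intros y. destruct (classic (Icc e k y)) as [H|H].
    - destruct (Hon y H) as [x Hx]. exists x; auto.
    - exists 0; intros; contradiction. }
  exists hi.
  assert (Hhi1 : forall y, Icc e k y -> Icc c d (hi y)) by (intros y Hy; apply (Hhi y Hy)).
  assert (Hhi2 : forall x, Icc c d x -> hi (phi x) = x).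
  { intros x Hx. destruct (Hhi (phi x) (Hin x Hx)). apply Hinj; auto. }
  assert (Hhi3 : forall y, Icc e k y -> phi (hi y) = y) by (intros y Hy; apply (Hhi y Hy)).
  split; [exact Hhi1|]. split; [exact Hhi2|]. split; [exact Hhi3|]. split.
  - apply (mono_onto_cont c d e k); auto.
  - apply (mono_onto_cont e k c d); auto.
    + intros y1 y2 H1 H2 Hlt. destruct (Rlt_or_le (hi y1) (hi y2)) as [H|H]; [exact H|].
      exfalso. destruct (Req_dec (hi y1) (hi y2)) as [E|E].
      * rewrite <- (Hhi3 y1), <- (Hhi3 y2) in Hlt by auto. rewrite E in Hlt; lra.
      * assert (phi (hi y2) < phi (hi y1)) by (apply Hm; auto; lra).
        rewrite Hhi3, Hhi3 in H0 by auto. lra.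
    + intros x Hx. exists (phi x). split; auto.
Qed.

Definition good (a : R) (F : R -> R) : Prop :=
  0 < a /\ F 0 = 0 /\
  (forall x y, 0 <= x -> x < y -> y <= a -> F x < F y) /\
  (forall x, 0 < x <= a -> F x < x) /\
  (forall eps, 0 < eps -> exists k, Nat.iter k F a < eps) /\
  (forall c, 0 <= c <= a -> forall y, 0 <= y <= F c -> exists w, 0 <= w <= c /\ F w = y).

Section Good.
Variables (a : R) (F : R -> R).
Hypothesis HG : good a F.

Lemma g_pos : 0 < a. Proof. apply HG. Qed.
Lemma g_0 : F 0 = 0. Proof. apply HG. Qed.
Lemma g_lt x y : 0 <= x -> x < y -> y <= a -> F x < F y. Proof. apply HG. Qed.
Lemma g_dec x : 0 < x <= a -> F x < x. Proof. apply HG. Qed.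
Lemma g_conv eps : 0 < eps -> exists k, Nat.iter k F a < eps. Proof. apply HG. Qed.
Lemma g_surj c : 0 <= c <= a -> forall y, 0 <= y <= F c -> exists w, 0 <= w <= c /\ F w = y.
Proof. apply HG. Qed.

Lemma g_le x y : 0 <= x -> x <= y -> y <= a -> F x <= F y.
Proof. intros. destruct (Req_dec x y); [subst; lra|]. left; apply g_lt; lra. Qed.

Lemma g_range x : 0 <= x <= a -> 0 <= F x <= x.
Proof.
  intros Hx. destruct (Req_dec x 0) as [E|E].
  - subst; rewrite g_0; lra.
  - pose proof (g_dec x ltac:(lra)). pose proof (g_lt 0 x ltac:(lra) ltac:(lra) ltac:(lra)).
    rewrite g_0 in *; lra.
Qed.

Lemma g_rangep x : 0 < x <= a -> 0 < F x < x.
Proof.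
  intros Hx. pose proof (g_dec x Hx). pose proof (g_lt 0 x ltac:(lra) ltac:(lra) ltac:(lra)).
  rewrite g_0 in *; lra.
Qed.

Lemma it_range n x : 0 <= x <= a -> 0 <= Nat.iter n F x <= x.
Proof.
  intros Hx; induction n; simpl; [lra|]. pose proof (g_range (Nat.iter n F x) ltac:(lra)); lra.
Qed.

Lemma it_rangep n x : 0 < x <= a -> 0 < Nat.iter n F x <= x.
Proof.
  intros Hx; induction n; simpl; [lra|]. pose proof (g_rangep (Nat.iter n F x) ltac:(lra)); lra.
Qed.

Lemma it_lt n x y : 0 <= x -> x < y -> y <= a -> Nat.iter n F x < Nat.iter n F y.
Proof.
  intros; induction n; simpl; [lra|].
  pose proof (it_range n x ltac:(lra)). pose proof (it_range n y ltac:(lra)).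
  apply g_lt; lra.
Qed.

Lemma it_le n x y : 0 <= x -> x <= y -> y <= a -> Nat.iter n F x <= Nat.iter n F y.
Proof. intros. destruct (Req_dec x y); [subst; lra|]. left; apply it_lt; lra. Qed.

Lemma it_mono_n n m : (n <= m)%nat -> Nat.iter m F a <= Nat.iter n F a.
Proof.
  intros H. replace m with ((m - n) + n)%nat by lia. rewrite Nat.iter_add.
  pose proof (it_range n a ltac:(pose proof g_pos; lra)).
  apply it_range; lra.
Qed.

Lemma it_surj n : forall y, Nat.iter (S n) F a < y <= Nat.iter n F a ->
  exists z, F a < z <= a /\ Nat.iter n F z = y.
Proof.
  pose proof g_pos as Ha.
  induction n as [|n IH]; intros y Hy.
  - exists y. simpl in *. split; [lra|reflexivity].
  - pose proof (it_range n a ltac:(lra)) as Hr.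
    destruct (g_surj (Nat.iter n F a) ltac:(lra) y) as [w [Hw Hfw]].
    { pose proof (it_range (S (S n)) a ltac:(lra)). simpl in *. lra. }
    assert (Hw2 : Nat.iter (S n) F a < w).
    { destruct (Rlt_or_le (Nat.iter (S n) F a) w) as [H|H]; [exact H|].
      exfalso. pose proof (it_range (S n) a ltac:(lra)).
      pose proof (g_le w (Nat.iter (S n) F a) ltac:(lra) H ltac:(lra)).
      simpl in *. lra. }
    destruct (IH w ltac:(lra)) as [z [Hz Hiz]]. exists z. split; [exact Hz|].
    simpl. rewrite Hiz. exact Hfw.
Qed.

Lemma ex_n x : 0 < x <= a -> exists n, Nat.iter (S n) F a < x <= Nat.iter n F a.
Proof.
  intros Hx. destruct (g_conv x ltac:(lra)) as [k Hk].
  revert Hk. induction k; intros Hk.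
  - simpl in Hk; lra.
  - destruct (Rlt_or_le (Nat.iter k F a) x) as [H|H].
    + apply IHk; exact H.
    + exists k; split; auto.
Qed.

Lemma rep x : 0 < x <= a -> exists n z, F a < z <= a /\ Nat.iter n F z = x.
Proof.
  intros Hx. destruct (ex_n x Hx) as [n Hn]. destruct (it_surj n x Hn) as [z Hz].
  exists n, z; exact Hz.
Qed.

Lemma rep_unique_aux n m z w : F a < z <= a -> F a < w <= a ->
  (n <= m)%nat -> Nat.iter n F z = Nat.iter m F w -> n = m /\ z = w.
Proof.
  intros Hz Hw Hnm E. pose proof g_pos as Hpa. pose proof (g_range a ltac:(lra)) as Hra.
  replace m with (n + (m - n))%nat in E by lia. rewrite Nat.iter_add in E.
  assert (Hw' : 0 <= Nat.iter (m - n) F w <= w) by (apply it_range; lra).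
  assert (E2 : z = Nat.iter (m - n) F w).
  { destruct (Rtotal_order z (Nat.iter (m - n) F w)) as [H|[H|H]]; auto.
    - pose proof (it_lt n z (Nat.iter (m - n) F w) ltac:(lra) H ltac:(lra)). lra.
    - pose proof (it_lt n (Nat.iter (m - n) F w) z ltac:(lra) H ltac:(lra)). lra. }
  destruct (m - n)%nat as [|k] eqn:Ek.
  - split; [lia|]. simpl in E2; exact E2.
  - exfalso. pose proof (it_range k w ltac:(lra)).
    simpl in E2. pose proof (g_le (Nat.iter k F w) a ltac:(lra) ltac:(lra) ltac:(lra)). lra.
Qed.

Lemma rep_unique n m z w : F a < z <= a -> F a < w <= a ->
  Nat.iter n F z = Nat.iter m F w -> n = m /\ z = w.
Proof.
  intros Hz Hw E. destruct (Nat.le_ge_cases n m).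
  - apply rep_unique_aux; auto.
  - destruct (rep_unique_aux m n w z) as [? ?]; auto.
Qed.

End Good.

Lemma gen_choice {A B : Type} {P : A -> B -> Prop} :
  (forall y, exists x, P y x) -> exists h : A -> B, forall y, P y (h y).
Proof.
  intros H. exists (fun y => proj1_sig (constructive_indefinite_description _ (H y))).
  intros y. exact (proj2_sig (constructive_indefinite_description _ (H y))).
Qed.

Lemma conj_inc a b F G : good a F -> good b G ->
  exists H : R -> R, H 0 = 0 /\
    (forall x, 0 < x <= a -> 0 < H x <= b) /\
    (forall x y, 0 <= x -> x < y -> y <= a -> H x < H y) /\
    (forall y, 0 < y <= b -> exists x, 0 < x <= a /\ H x = y) /\
    (forall x, 0 <= x <= a -> H (F x) = G (H x)).
Proof.
  intros HF HG.
  pose proof (g_pos _ _ HF) as Ha. pose proof (g_pos _ _ HG) as Hb.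
  pose proof (g_rangep _ _ HF a ltac:(lra)) as HFa.
  pose proof (g_rangep _ _ HG b ltac:(lra)) as HGb.
  destruct (@gen_choice R (nat * R)%type
     (fun x p => 0 < x <= a -> F a < snd p <= a /\ Nat.iter (fst p) F (snd p) = x)) as [Rp HRp].
  { intros x. destruct (classic (0 < x <= a)) as [Hx|Hx].
    - destruct (rep _ _ HF x Hx) as [n [z Hz]]. exists (n, z). intros _. exact Hz.
    - exists (O, 0). intros; contradiction. }
  set (k := (b - G b) / (a - F a)).
  assert (Hk : 0 < k) by (unfold k; apply Rdiv_lt_0_compat; lra).
  assert (Hk2 : k * (a - F a) = b - G b) by (unfold k; field; lra).
  set (L := fun z => G b + (z - F a) * k).
  assert (HL1 : forall z, F a < z <= a -> G b < L z <= b).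
  { intros z Hz; unfold L; split; nra. }
  assert (HL2 : forall z w, z < w -> L z < L w) by (intros; unfold L; nra).
  assert (HL3 : forall u, G b < u <= b -> exists z, F a < z <= a /\ L z = u).
  { intros u Hu. exists (F a + (u - G b) / k). unfold L.
    assert (E : (F a + (u - G b) / k - F a) * k = u - G b) by (field; lra).
    split; [|lra].
    assert (0 < (u - G b) / k) by (apply Rdiv_lt_0_compat; lra).
    assert ((u - G b) / k <= a - F a).
    { apply (Rmult_le_reg_r k); [lra|]. unfold Rdiv. rewrite Rmult_assoc, Rinv_l by lra. nra. }
    lra. }
  set (H := fun x => if Rlt_dec 0 x then Nat.iter (fst (Rp x)) G (L (snd (Rp x))) else 0).
  assert (Hkey : forall n z, F a < z <= a -> H (Nat.iter n F z) = Nat.iter n G (L z)).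
  { intros n z Hz. pose proof (it_rangep _ _ HF n z ltac:(lra)) as Hp.
    unfold H. destruct (Rlt_dec 0 (Nat.iter n F z)) as [_|C]; [|lra].
    destruct (HRp (Nat.iter n F z) ltac:(lra)) as [Hs Hi].
    destruct (rep_unique _ _ HF _ _ _ _ Hs Hz Hi) as [E1 E2].
    rewrite E1, E2. reflexivity. }
  assert (Hrep : forall x, 0 < x <= a -> exists n z, F a < z <= a /\ x = Nat.iter n F z).
  { intros x Hx. destruct (rep _ _ HF x Hx) as [n [z [Hz E]]]. exists n, z; auto. }
  assert (HGit : forall n u, 0 < u <= b -> 0 < Nat.iter n G u <= b).
  { intros n u Hu. pose proof (it_rangep _ _ HG n u Hu). lra. }
  exists H. split; [|split; [|split; [|split]]].
  - unfold H. destruct (Rlt_dec 0 0); [lra|reflexivity].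
  - intros x Hx. destruct (Hrep x Hx) as [n [z [Hz ->]]]. rewrite Hkey by auto.
    apply HGit. pose proof (HL1 z Hz); lra.
  - intros x y Hx Hxy Hy.
    destruct (Rle_lt_or_eq_dec 0 x Hx) as [Hx0|Hx0].
    2:{ subst x. replace (H 0) with 0 by (unfold H; destruct (Rlt_dec 0 0); [lra|reflexivity]).
        destruct (Hrep y ltac:(lra)) as [n [z [Hz ->]]]. rewrite Hkey by auto.
        apply HGit. pose proof (HL1 z Hz); lra. }
    destruct (Hrep x ltac:(lra)) as [n [z [Hz ->]]].
    destruct (Hrep y ltac:(lra)) as [m [w [Hw ->]]].
    rewrite !Hkey by auto.
    destruct (Nat.lt_trichotomy n m) as [Hnm|[Hnm|Hnm]].
    + exfalso.
      pose proof (it_le _ _ HF m w a ltac:(lra) ltac:(lra) ltac:(lra)).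
      pose proof (it_mono_n _ _ HF (S n) m Hnm).
      pose proof (it_lt _ _ HF n (F a) z ltac:(lra) ltac:(lra) ltac:(lra)).
      rewrite <- Nat.iter_succ_r in H2. lra.
    + subst m. assert (z < w).
      { destruct (Rlt_or_le z w) as [h|h]; [exact h|].
        pose proof (it_le _ _ HF n w z ltac:(lra) h ltac:(lra)). lra. }
      apply (it_lt _ _ HG); pose proof (HL1 z Hz); pose proof (HL1 w Hw); try lra.
      apply HL2; auto.
    + pose proof (HL1 z Hz); pose proof (HL1 w Hw).
      pose proof (it_le _ _ HG n (L z) b ltac:(lra) ltac:(lra) ltac:(lra)).
      pose proof (it_mono_n _ _ HG (S m) n Hnm).
      pose proof (it_lt _ _ HG m (G b) (L w) ltac:(lra) ltac:(lra) ltac:(lra)).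
      rewrite <- Nat.iter_succ_r in H4. lra.
  - intros y Hy. destruct (rep _ _ HG y Hy) as [m [u [Hu E]]].
    destruct (HL3 u Hu) as [z [Hz Ez]].
    exists (Nat.iter m F z). split.
    + pose proof (it_rangep _ _ HF m z ltac:(lra)); lra.
    + rewrite Hkey by auto. rewrite Ez. exact E.
  - intros x Hx. destruct (Rle_lt_or_eq_dec 0 x ltac:(lra)) as [Hx0|Hx0].
    + destruct (Hrep x ltac:(lra)) as [n [z [Hz ->]]].
      change (F (Nat.iter n F z)) with (Nat.iter (S n) F z).
      rewrite !Hkey by auto. reflexivity.
    + subst x. rewrite (g_0 _ _ HF).
      replace (H 0) with 0 by (unfold H; destruct (Rlt_dec 0 0); [lra|reflexivity]).
      rewrite (g_0 _ _ HG). reflexivity.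
Qed.

Lemma cont_sub D D' (phi : R -> R) : continuous_on D phi -> (forall x, D' x -> D x) ->
  continuous_on D' phi.
Proof.
  intros Hc Hs x Hx eps Heps. destruct (Hc x (Hs x Hx) eps Heps) as [d [Hd Hd2]].
  exists d; split; auto.
Qed.

Lemma cont_comp D E (phi psi : R -> R) : continuous_on D phi -> continuous_on E psi ->
  (forall x, D x -> E (phi x)) -> continuous_on D (fun x => psi (phi x)).
Proof.
  intros Hp Hq Hm x Hx eps Heps.
  destruct (Hq (phi x) (Hm x Hx) eps Heps) as [d1 [Hd1 H1]].
  destruct (Hp x Hx d1 Hd1) as [d2 [Hd2 H2]].
  exists d2; split; auto.
Qed.

Lemma dec_inj D (f : R -> R) x y : decreasing_on D f -> D x -> D y -> f x = f y -> x = y.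
Proof.
  intros Hd Hx Hy E. destruct (Rtotal_order x y) as [H|[H|H]]; auto.
  - pose proof (Hd _ _ Hx Hy H); lra.
  - pose proof (Hd _ _ Hy Hx H); lra.
Qed.

Lemma good_of (a : R) (f : R -> R) :
  0 < a -> (forall x, Icc (f a) a x -> Icc (f a) a (f x)) ->
  decreasing_on (Icc (f a) a) f -> continuous_on (Icc (f a) a) f ->
  Icc (f a) a 0 -> f 0 = 0 -> (forall x, 0 < x <= a -> f (f x) < x) ->
  good a (fun x => f (f x)).
Proof.
  intros Ha Hmap Hdec Hc H0 Hf0 Hlt.
  assert (HJa : Icc (f a) a a) by (unfold Icc in *; lra).
  assert (Hfa : f a < 0) by (rewrite <- Hf0; apply Hdec; auto).
  assert (HJ : forall x, 0 <= x <= a -> Icc (f a) a x) by (unfold Icc; intros; lra).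
  set (F := fun x => f (f x)).
  assert (Hmono : forall x y, 0 <= x -> x < y -> y <= a -> F x < F y).
  { intros x y Hx Hxy Hy. unfold F. apply Hdec; try apply Hmap; try apply HJ; try lra.
    apply Hdec; try apply HJ; lra. }
  assert (HF0 : F 0 = 0) by (unfold F; rewrite !Hf0; reflexivity).
  assert (Hrange : forall x, 0 <= x <= a -> 0 <= F x <= x).
  { intros x Hx. destruct (Req_dec x 0) as [E|E]; [subst; rewrite HF0; lra|].
    pose proof (Hlt x ltac:(lra)). pose proof (Hmono 0 x ltac:(lra) ltac:(lra) ltac:(lra)).
    unfold F in *; lra. }
  assert (HFc : continuous_on (fun x => 0 <= x <= a) F).
  { apply (cont_comp (fun x => 0 <= x <= a) (Icc (f a) a) f f).
    - apply (cont_sub (Icc (f a) a)); [exact Hc| exact HJ].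
    - exact Hc.
    - intros x Hx; apply Hmap, HJ, Hx. }
  split; [exact Ha|]. split; [exact HF0|]. split; [exact Hmono|]. split; [exact Hlt|]. split.
  - intros eps Heps. apply NNPP. intros Hn.
    assert (Hge : forall k, eps <= Nat.iter k F a).
    { intros k. destruct (Rlt_or_le (Nat.iter k F a) eps) as [h|h]; auto.
      exfalso; apply Hn; exists k; exact h. }
    set (u := fun k => Nat.iter k F a).
    assert (Hur : forall k, 0 <= u k <= a).
    { induction k; unfold u in *; simpl; [lra|]. pose proof (Hrange _ IHk); lra. }
    assert (Hud : Un_decreasing u).
    { intros n. unfold u; simpl. pose proof (Hrange _ (Hur n)). unfold u in *; lra. }
    assert (Hlb : has_lb u).
    { exists 0. intros x [n ->]. unfold opp_seq. pose proof (Hur n); lra. }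
    destruct (decreasing_cv u Hud Hlb) as [l Hl].
    assert (Hll : forall n, l <= u n) by (apply decreasing_ineq; auto).
    assert (Hle : eps <= l).
    { destruct (Rlt_or_le l eps) as [h|h]; auto. exfalso.
      destruct (Hl (eps - l) ltac:(lra)) as [N HN]. specialize (HN N (le_n N)).
      unfold Rdist in HN. specialize (Hge N). unfold u in HN.
      unfold Rabs in HN; destruct Rcase_abs in HN; lra. }
    assert (Hla : l <= a) by (apply (Hll O)).
    assert (HFl : F l < l) by (apply Hlt; lra).
    destruct (HFc l ltac:(lra) (l - F l) ltac:(lra)) as [d [Hd Hd2]].
    destruct (Hl d Hd) as [N HN]. specialize (HN N (le_n N)). unfold Rdist in HN.
    specialize (Hd2 (u N) (Hur N) HN). specialize (Hll (S N)).
    unfold u in Hll; simpl in Hll. unfold u in Hd2.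
    unfold Rabs in Hd2; destruct Rcase_abs in Hd2; lra.
  - intros c Hc0 y Hy.
    destruct (ivt_on 0 c F y ltac:(lra)) as [w [Hw Hfw]].
    + apply (cont_sub _ _ _ HFc). unfold Icc; intros; lra.
    + rewrite HF0. left; lra.
    + exists w. split; [exact Hw|exact Hfw].
Qed.

Theorem theorem6 (a b : R) (f g : R -> R) :
  0 < a -> 0 < b ->
  (forall x, Icc (g b) b x -> Icc (g b) b (g x)) ->
  decreasing_on (Icc (g b) b) g ->
  homeo_onto (Icc (g b) b) (image g (Icc (g b) b)) g ->
  (forall x, Icc (f a) a x -> Icc (f a) a (f x)) ->
  decreasing_on (Icc (f a) a) f ->
  homeo_onto (Icc (f a) a) (image f (Icc (f a) a)) f ->
  attracting_fixed_point (Icc (f a) a) f 0 ->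
  attracting_fixed_point (Icc (g b) b) g 0 ->
  (forall x, 0 < x <= b -> g (g x) < x) ->
  (forall x, 0 < x <= a -> f (f x) < x) ->
  exists h : R -> R,
    homeo_onto (Icc (f a) a) (Icc (g b) b) h /\
    forall x, Icc (f a) a x -> g (h x) = h (f x).
Proof.
  intros Ha Hb Hgm Hgd [_ [gi [_ [_ [_ [Hgc _]]]]]] Hfm Hfd [_ [fi [_ [_ [_ [Hfc _]]]]]]
    [Hf0J [Hf0 _]] [Hg0J [Hg0 _]] Hg2 Hf2.
  pose proof (good_of a f Ha Hfm Hfd Hfc Hf0J Hf0 Hf2) as GF.
  pose proof (good_of b g Hb Hgm Hgd Hgc Hg0J Hg0 Hg2) as GG.
  destruct (conj_inc _ _ _ _ GF GG) as [H [H0 [Hrng [Hmono [Hsurj Hconj]]]]].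
  assert (HJa : Icc (f a) a a) by (unfold Icc in *; lra).
  assert (HIb : Icc (g b) b b) by (unfold Icc in *; lra).
  assert (Hfa : f a < 0) by (rewrite <- Hf0; apply Hfd; auto).
  assert (Hgb : g b < 0) by (rewrite <- Hg0; apply Hgd; auto).
  assert (HJ : forall x, 0 <= x <= a -> Icc (f a) a x) by (unfold Icc; intros; lra).
  assert (HI : forall x, 0 <= x <= b -> Icc (g b) b x) by (unfold Icc; intros; lra).
  destruct (@gen_choice R R (fun x z => f a <= x < 0 -> 0 < z <= a /\ f z = x)) as [Zf HZf].
  { intros x. destruct (classic (f a <= x < 0)) as [Hx|Hx].
    - destruct (ivt_on 0 a f x ltac:(lra)) as [z [Hz Hfz]].
      + apply (cont_sub (Icc (f a) a)); [exact Hfc|exact HJ].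
      + right; lra.
      + exists z. intros _. split; [|exact Hfz].
        destruct Hz as [Hz1 Hz2]. destruct (Req_dec z 0) as [E|E]; [subst; lra|lra].
    - exists 0. intros; contradiction. }
  assert (Hgneg : forall y, 0 < y <= b -> g b <= g y < 0).
  { intros y Hy. split.
    - apply (Hgm y (HI y ltac:(lra))).
    - rewrite <- Hg0. apply Hgd; try apply HI; lra. }
  set (h := fun x => if Rle_dec 0 x then H x else g (H (Zf x))).
  assert (Hhp : forall x, 0 <= x -> h x = H x).
  { intros x Hx; unfold h; destruct (Rle_dec 0 x); [reflexivity|lra]. }
  assert (Hhn : forall x, x < 0 -> h x = g (H (Zf x))).
  { intros x Hx; unfold h; destruct (Rle_dec 0 x); [lra|reflexivity]. }
  assert (HHr : forall x, 0 <= x <= a -> 0 <= H x <= b).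
  { intros x Hx. destruct (Req_dec x 0) as [E|E]; [subst; rewrite H0; lra|].
    pose proof (Hrng x ltac:(lra)); lra. }
  exists h. split.
  - apply mono_onto_homeo.
    + intros x y Hx Hy Hxy. unfold Icc in Hx, Hy.
      destruct (Rle_lt_dec 0 x) as [Hx0|Hx0].
      * rewrite !Hhp by lra. apply Hmono; lra.
      * destruct (HZf x ltac:(lra)) as [Hzx Efx].
        rewrite (Hhn x Hx0).
        destruct (Rle_lt_dec 0 y) as [Hy0|Hy0].
        -- rewrite (Hhp y Hy0). pose proof (Hgneg _ (Hrng _ Hzx)). pose proof (HHr y ltac:(lra)). lra.
        -- rewrite (Hhn y Hy0). destruct (HZf y ltac:(lra)) as [Hzy Efy].
           assert (Zf y < Zf x).
           { destruct (Rlt_or_le (Zf y) (Zf x)) as [h1|h1]; [exact h1|].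
             exfalso. destruct (Req_dec (Zf x) (Zf y)) as [E|E].
             - rewrite <- Efx, <- Efy, E in Hxy; lra.
             - assert (f (Zf y) < f (Zf x)) by (apply Hfd; try apply HJ; lra). lra. }
           pose proof (Hmono (Zf y) (Zf x) ltac:(lra) H1 ltac:(lra)).
           pose proof (Hrng _ Hzx). pose proof (Hrng _ Hzy).
           apply Hgd; try apply HI; lra.
    + intros x Hx. unfold Icc in Hx. destruct (Rle_lt_dec 0 x) as [Hx0|Hx0].
      * rewrite Hhp by lra. apply HI, HHr; lra.
      * rewrite Hhn by lra. destruct (HZf x ltac:(lra)) as [Hz _].
        pose proof (Hgneg _ (Hrng _ Hz)). unfold Icc; lra.
    + intros y Hy. unfold Icc in Hy. destruct (Rle_lt_dec 0 y) as [Hy0|Hy0].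
      * destruct (Req_dec y 0) as [E|E].
        -- exists 0. split; [apply HJ; lra|]. rewrite Hhp by lra. rewrite H0; auto.
        -- destruct (Hsurj y ltac:(lra)) as [x [Hx Ex]]. exists x. split; [apply HJ; lra|].
           rewrite Hhp by lra. exact Ex.
      * destruct (ivt_on 0 b g y ltac:(lra)) as [w [Hw Hgw]].
        { apply (cont_sub (Icc (g b) b)); [exact Hgc|exact HI]. }
        { right; lra. }
        assert (Hw0 : 0 < w <= b).
        { destruct Hw as [Hw1 Hw2]. destruct (Req_dec w 0) as [E|E]; [subst; lra|lra]. }
        destruct (Hsurj w Hw0) as [z [Hz Ez]].
        assert (Hfz : f a <= f z < 0).
        { split.
          - apply (Hfm z (HJ z ltac:(lra))).
          - rewrite <- Hf0. apply Hfd; try apply HJ; lra. }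
        exists (f z). split; [unfold Icc; lra|].
        rewrite Hhn by lra. destruct (HZf (f z) Hfz) as [Hz' Ez'].
        assert (Zf (f z) = z) by (apply (dec_inj _ f _ _ Hfd); try apply HJ; lra).
        rewrite H1, Ez. exact Hgw.
  - intros x Hx. unfold Icc in Hx.
    destruct (Rlt_or_le 0 x) as [Hx0|Hx0].
    + assert (Hfx : f a <= f x < 0).
      { split.
        - apply (Hfm x (HJ x ltac:(lra))).
        - rewrite <- Hf0. apply Hfd; try apply HJ; lra. }
      rewrite Hhp by lra. rewrite Hhn by lra.
      destruct (HZf (f x) Hfx) as [Hz' Ez'].
      assert (Zf (f x) = x) by (apply (dec_inj _ f _ _ Hfd); try apply HJ; lra).
      rewrite H1; reflexivity.
    + destruct (Req_dec x 0) as [E|E].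
      * subst x. rewrite Hf0, Hhp by lra. rewrite H0, Hg0; reflexivity.
      * destruct (HZf x ltac:(lra)) as [Hz Ez].
        assert (Hfx : 0 < f x).
        { rewrite <- Ez. rewrite <- Hf0 at 1. apply Hfd; try apply Hfm; try apply HJ; try lra. }
        rewrite Hhn by lra. rewrite Hhp by lra.
        rewrite <- (Hconj (Zf x)) by lra. rewrite Ez. reflexivity.
Qed.
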